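(* Let $D\in\mathcal{O}_d$ be a discriminant and let $(t,u)\in\mathcal{O}_d^2$ satisfy $t^2-Du^2=4$ and $4<|t|<\frac49|u|^2$. Let $\tau\in\mathcal{O}_d/u\mathcal{O}_d$ be the residue class of $\frac{t-\beta u}{2}$, where $\beta,\xi\in\mathcal{O}_d$ are any elements with $D=\beta^2+4\xi$. Then every loxodromic element $B\in\mathrm{SL}_2(\mathcal{O}_d)_\tau[u]$ satisfies $$4\cosh(\ell(B))\ge|t|^2+|t^2-4|.$$ In particular, if a loxodromic element $B\in\mathrm{SL}_2(\mathcal{O}_d)_\tau[u]$ has $\mathrm{tr}(B)=t$, then $\ell(B)$ is the minimum of the translation lengths of loxodromic elements of $\mathrm{SL}_2(\mathcal{O}_d)_\tau[u]$, i.e. $B$ determines a closed geodesic of shortest length in $\mathrm{SL}_2(\mathcal{O}_d)_\tau[u]\backslash\mathbb{H}^3$.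
   Context: $d\in\{1,2,3,7,11,19,43,67,163\}$ (so $k_d=\mathbb{Q}(\sqrt{-d})$ has class number one), $\mathcal{O}_d$ is the ring of integers of $k_d$. An element $D\in\mathcal{O}_d$ is a discriminant if $D$ is not a perfect square in $\mathcal{O}_d$ and $D\equiv x^2\pmod{4\mathcal{O}_d}$ for some $x\in\mathcal{O}_d$; then $D=\beta^2+4\xi$ for some $\beta,\xi\in\mathcal{O}_d$, $\frac{t-\beta u}{2}\in\mathcal{O}_d$, and its class $\tau$ modulo $u\mathcal{O}_d$ is independent of the choice of $\beta,\xi$ and satisfies $\tau^2=1$ in $\mathcal{O}_d/u\mathcal{O}_d$. With $\pi_u:\mathrm{SL}_2(\mathcal{O}_d)\to\mathrm{SL}_2(\mathcal{O}_d/u\mathcal{O}_d)$ the reduction map and $\mathrm{Id}$ the identity matrix, $\mathrm{SL}_2(\mathcal{O}_d)_\tau[u]:=\pi_u^{-1}(\{\mathrm{Id},\tau\,\mathrm{Id}\})$. An element $B\in\mathrm{SL}_2(\mathbb{C})$ is loxodromic if $\mathrm{tr}(B)\notin[-2,2]$, and $\ell(B)$ denotes its translation length along its axis in $\mathbb{H}^3$. *)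

(* Defs.v *)
From HB Require Import structures.
From mathcomp Require Import all_boot all_order all_algebra.
From mathcomp Require Import complex.
From mathcomp Require Import all_classical all_reals.
From mathcomp Require Import Rstruct.
From mathcomp.analysis Require Import sequences exp.
Set Implicit Arguments.
Unset Strict Implicit.
Unset Printing Implicit Defensive.
Import Order.TTheory GRing.Theory Num.Theory.
Local Open Scope ring_scope.
Local Open Scope complex_scope.

Notation RR := Rdefinitions.R.
Notation CC := (RR[i]).

Definition class_number_one_d (d : nat) : bool :=
  d \in [:: 1; 2; 3; 7; 11; 19; 43; 67; 163]%N.

(* generator of O_d over Z: sqrt(-d) if d = 1,2 (d = 1,2 mod 4),
   (1 + sqrt(-d))/2 if d = 3 mod 4 (all other listed d) *)
Definition omega_d (d : nat) : CC :=
  if (d <= 2)%N then Complex 0 (Num.sqrt (d%:R : RR))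
  else Complex (1/2) (Num.sqrt (d%:R : RR) / 2).

Definition inO (d : nat) (z : CC) : Prop :=
  exists a b : int, z = a%:~R + b%:~R * omega_d d.

Definition dvdO (d : nat) (u x : CC) : Prop :=
  exists k : CC, inO d k /\ x = u * k.

Definition discriminant (d : nat) (D : CC) : Prop :=
  [/\ inO d D,
      ~ (exists x : CC, inO d x /\ D = x ^+ 2)
    & exists x : CC, inO d x /\ dvdO d 4 (D - x ^+ 2)].

Definition inSL2O (d : nat) (B : 'M[CC]_2) : Prop :=
  (forall i j, inO d (B i j)) /\ \det B = 1.

(* SL_2(O_d)_tau[u] = pi_u^{-1}({Id, tau Id}) : B is congruent modulo u O_d
   (entrywise) to Id or to tau * Id *)
Definition inSL2O_tau_u (d : nat) (tau u : CC) (B : 'M[CC]_2) : Prop :=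
  inSL2O d B /\
  ((forall i j, dvdO d u (B i j - (i == j)%:R)) \/
   (forall i j, dvdO d u (B i j - (i == j)%:R * tau))).

Definition loxodromic (B : 'M[CC]_2) : Prop :=
  ~ (complex.Im (\tr B) = 0 /\ -2 <= complex.Re (\tr B) <= 2).

Definition cabs (z : CC) : RR := Num.sqrt (complex.Re z ^+ 2 + complex.Im z ^+ 2).

Definition coshR (x : RR) : RR := (expR x + expR (- x)) / 2.

(* translation length of B in SL_2(C) acting on H^3:
   ell(B) = 2 log|lambda|, lambda the eigenvalue of B of modulus >= 1.
   Here lambda is a root of X^2 - tr(B) X + 1 (the other root is 1/lambda),
   so 2 |log |lambda|| does not depend on the root chosen. *)
Definition eig (B : 'M[CC]_2) : CC :=
  (\tr B + sqrtc ((\tr B) ^+ 2 - 4)) / 2.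

Definition transl_length (B : 'M[CC]_2) : RR :=
  2 * `| ln (cabs (eig B)) |.

(* Main.v *)
Require Import Defs.
From HB Require Import structures.
From mathcomp Require Import all_boot all_order all_algebra.
From mathcomp Require Import complex.
From mathcomp Require Import all_classical all_reals.
From mathcomp Require Import Rstruct.
From mathcomp.analysis Require Import sequences exp.
From mathcomp Require Import ring lra zify.
Import Order.TTheory GRing.Theory Num.Theory.
Local Open Scope ring_scope.
Local Open Scope complex_scope.
Definition i0 : 'I_2 := ord0.
Definition i1 : 'I_2 := lift ord0 ord0.
Lemma det22 (R : comNzRingType) (A : 'M[R]_2) : \det A = A i0 i0 * A i1 i1 - A i0 i1 * A i1 i0.
Proof.
rewrite (expand_det_row _ ord0) !big_ord_recl big_ord0 /cofactor !det_mx11 /=.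
rewrite !mxE /bump /= expr0 expr1 !mul1r mulN1r addr0 mulrN.
by congr (_ * _ - _ * _); congr (A _ _); apply/val_inj.
Qed.

Lemma tr22 (R : comNzRingType) (A : 'M[R]_2) : \tr A = A i0 i0 + A i1 i1.
Proof. 
rewrite /mxtrace !big_ord_recl big_ord0 addr0. by []. Qed.

Lemma cmul (x y a b: RR) : Complex x y * Complex a b = Complex (x*a - y*b) (x*b + y*a).
Proof. by []. Qed.
Lemma cadd (x y a b: RR) : Complex x y + Complex a b = Complex (x+a) (y+b).
Proof. by []. Qed.
Lemma cint (a : int) : (a%:~R : CC) = Complex (a%:~R) 0.
Proof. by rewrite -(rmorph_int (real_complex RR)). Qed.
Lemma cnat (n : nat) : (n%:R : CC) = Complex (n%:R) 0.
Proof. by rewrite -(rmorph_nat (real_complex RR)). Qed.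
Lemma sqrtK2 (x : RR) : 0 <= x -> Num.sqrt x * Num.sqrt x = x.
Proof. by move=> h; rewrite -expr2 sqr_sqrtr. Qed.

Lemma omega_small d : (d <= 2)%N ->
  omega_d d ^+ 2 = (- (d%:Z))%:~R + (0%:Z)%:~R * omega_d d.
Proof.
move=> h; rewrite /omega_d h !cint expr2 !cmul cadd; congr Complex.
  by rewrite sqrtK2 ?ler0n // intrN pmulrn; ring.
by ring.
Qed.

Lemma omega_big d k : ~~ (d <= 2)%N -> (d.+1 = 4 * k)%N ->
  omega_d d ^+ 2 = (- (k%:Z))%:~R + (1%:Z)%:~R * omega_d d.
Proof.
move=> h hk; rewrite /omega_d (negbTE h) !cint expr2 !cmul cadd; congr Complex.
  rewrite intrN !pmulrn.
  have -> : Num.sqrt (d%:R : RR) / 2 * (Num.sqrt d%:R / 2) = d%:R / 4.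
    by rewrite mulrACA sqrtK2 ?ler0n // -invfM; congr (_ / _); rewrite -natrM.
  have hk' : (d%:R : RR) = 4 * k%:R - 1.
    by apply/eqP; rewrite eq_sym subr_eq -natrM -hk -addn1 natrD.
  by rewrite hk'; field.
by field.
Qed.

Lemma omega2 d : class_number_one_d d ->
  exists p q : int, omega_d d ^+ 2 = p%:~R + q%:~R * omega_d d.
Proof.
rewrite /class_number_one_d !inE.
case/orP=> [/eqP->|]; first by exists (- (1%:Z)), 0; apply: omega_small.
case/orP=> [/eqP->|]; first by exists (- (2%:Z)), 0; apply: omega_small.
case/orP=> [/eqP->|]; first by exists (- (1%:Z)), 1; apply: (@omega_big _ 1).
case/orP=> [/eqP->|]; first by exists (- (2%:Z)), 1; apply: (@omega_big _ 2).
case/orP=> [/eqP->|]; first by exists (- (3%:Z)), 1; apply: (@omega_big _ 3).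
case/orP=> [/eqP->|]; first by exists (- (5%:Z)), 1; apply: (@omega_big _ 5).
case/orP=> [/eqP->|]; first by exists (- (11%:Z)), 1; apply: (@omega_big _ 11).
case/orP=> [/eqP->|]; first by exists (- (17%:Z)), 1; apply: (@omega_big _ 17).
move=> /eqP->; by exists (- (41%:Z)), 1; apply: (@omega_big _ 41).
Qed.

Lemma inO_int d (a : int) : inO d a%:~R.
Proof. by exists a, 0; rewrite mul0r addr0. Qed.
Lemma inO0 d : inO d 0.
Proof. by have := inO_int d 0; rewrite mulr0z. Qed.
Lemma inO1 d : inO d 1.
Proof. by have := inO_int d 1. Qed.
Lemma inOD d x y : inO d x -> inO d y -> inO d (x + y).
Proof.
move=> [a [b ->]] [c [e ->]]; exists (a + c), (b + e).
rewrite !intrD; ring.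
Qed.
Lemma inON d x : inO d x -> inO d (- x).
Proof.
move=> [a [b ->]]; exists (- a), (- b); rewrite !intrN; ring.
Qed.
Lemma inOB d x y : inO d x -> inO d y -> inO d (x - y).
Proof. by move=> hx hy; apply: inOD => //; apply: inON. Qed.
Lemma inOM d x y : class_number_one_d d -> inO d x -> inO d y -> inO d (x * y).
Proof.
move=> hd [a [b ->]] [c [e ->]]; have [p [q hw]] := omega2 d hd.
exists (a * c + b * e * p), (a * e + b * c + b * e * q).
rewrite !intrD !intrM.
apply/eqP; rewrite -subr_eq0; apply/eqP.
transitivity ((b%:~R * e%:~R) * (omega_d d ^+ 2 - (p%:~R + q%:~R * omega_d d)) : CC).
  ring.
by rewrite hw subrr mulr0.
Qed.

Lemma cabs2 (z : CC) : cabs z ^+ 2 = complex.Re z ^+ 2 + complex.Im z ^+ 2.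
Proof. by rewrite /cabs sqr_sqrtr // addr_ge0 // sqr_ge0. Qed.
Lemma cabsC (z : CC) : `|z| = (cabs z)%:C.
Proof. by rewrite normc_def. Qed.
Lemma cabs_ge0 z : 0 <= cabs z.
Proof. exact: sqrtr_ge0. Qed.
Lemma realC_inj (a b : RR) : a%:C = b%:C -> a = b.
Proof. by case. Qed.
Lemma cabsM x y : cabs (x * y) = cabs x * cabs y.
Proof. by apply: realC_inj; rewrite rmorphM /= -!cabsC normrM. Qed.
Lemma cabsD x y : cabs (x + y) <= cabs x + cabs y.
Proof. by rewrite -lecR rmorphD /= -!cabsC ler_normD. Qed.
Lemma cabsN x : cabs (- x) = cabs x.
Proof. by apply: realC_inj; rewrite -!cabsC normrN. Qed.
Lemma cabsX2 x : cabs (x ^+ 2) = cabs x ^+ 2.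
Proof. by rewrite !expr2 cabsM. Qed.
Lemma cabs_real (a : RR) : cabs (a%:C) = `|a|.
Proof. by rewrite /cabs /= expr0n addr0 sqrtr_sqr. Qed.
Lemma cabs_nat n : cabs (n%:R) = n%:R.
Proof. by rewrite cnat -[Complex _ _]/((n%:R : RR)%:C) cabs_real ger0_norm. Qed.
Lemma cabsDr x y : cabs x - cabs y <= cabs (x + y).
Proof.
have := cabsD (x + y) (- y); rewrite addrK cabsN; lra.
Qed.
Lemma cabsBr x y : cabs x - cabs y <= cabs (x - y).
Proof. by have := cabsDr x (- y); rewrite cabsN. Qed.
Lemma cabsB x y : cabs (x - y) <= cabs x + cabs y.
Proof. by have := cabsD x (- y); rewrite cabsN. Qed.
Lemma int1 (a b dd : int) : 1 <= dd -> (a != 0) || (b != 0) -> 1 <= a^+2 + dd * b^+2.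
Proof. move=> h1 /orP [] h. nia. nia. Qed.
Lemma int2 (a b dd : int) : 3 <= dd -> (a != 0) || (b != 0) -> 4 <= (2*a+b)^+2 + dd * b^+2.
Proof. move=> h1 /orP [] h. 
 have [->|hb] := eqVneq b 0. nia.
 have [hc|hc] := eqVneq (2*a+b) 0. have -> : b = -2 * a by lia. nia. nia. 
 have [hc|hc] := eqVneq (2*a+b) 0. have -> : b = -2 * a by lia. 
 have ha : a != 0 by lia. nia. nia. Qed.

Lemma eq_by (R : comRingType) (x y c e : R) : x - y = c * e -> e = 0 -> x = y.
Proof. by move=> h he; apply/eqP; rewrite -subr_eq0 h he mulr0. Qed.

Lemma t4 : ((4 : int)%:~R : RR) = 4.
Proof. by []. Qed.

Lemma cabs_ge1 d z : class_number_one_d d -> inO d z -> z != 0 -> 1 <= cabs z.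
Proof.
move=> hd [a [b ez]] nz.
have hab : (a != 0) || (b != 0).
  apply: contraNT nz; rewrite negb_or !negbK => /andP[/eqP a0 /eqP b0].
  by apply/eqP; rewrite ez a0 b0 mul0r addr0.
suff h1 : 1 <= cabs z ^+ 2.
  have := cabs_ge0 z; nra.
have hd1 : (1 <= d)%N by move: hd; rewrite /class_number_one_d !inE => /orP[/eqP->|/orP[/eqP->|/orP[/eqP->|/orP[/eqP->|/orP[/eqP->|/orP[/eqP->|/orP[/eqP->|/orP[/eqP->|/eqP->]]]]]]]].
have hs : Num.sqrt (d%:R : RR) ^+ 2 = d%:R by rewrite sqr_sqrtr ?ler0n.
rewrite cabs2 ez /omega_d.
case: ifP => hd2; rewrite !cint !cmul !cadd /=.
  have hi : 1 <= a ^+ 2 + d%:Z * b ^+ 2 by apply: (int1 _ _ _ _ hab).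
  have : ((1 : int)%:~R <= (a ^+ 2 + d%:Z * b ^+ 2)%:~R :> RR) by rewrite ler_int.
  have -> : ((a ^+ 2 + d%:Z * b ^+ 2)%:~R :> RR) = 
     (a%:~R + (b%:~R * 0 - 0 * Num.sqrt d%:R)) ^+ 2 + (0 + (b%:~R * Num.sqrt d%:R + 0 * 0)) ^+ 2.
    rewrite !(expr2, intrD, intrM) pmulrn.
    apply: (@eq_by _ _ _ (- (b%:~R * b%:~R)) (Num.sqrt (d%:R : RR) ^+ 2 - d%:R)); last by rewrite hs subrr.
    rewrite expr2; ring.
  done.
have hd3 : (3 <= d)%N by rewrite leqNgt ltnS hd2.
have hi : 4 <= (2*a + b) ^+ 2 + d%:Z * b ^+ 2 by apply: (int2 _ _ _ _ hab).
have : ((4 : int)%:~R <= ((2*a + b) ^+ 2 + d%:Z * b ^+ 2)%:~R :> RR) by rewrite ler_int.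
have -> : (((2*a + b) ^+ 2 + d%:Z * b ^+ 2)%:~R :> RR) =
   4 * ((a%:~R + (b%:~R * (1 / 2) - 0 * (Num.sqrt d%:R / 2))) ^+ 2 +
         (0 + (b%:~R * (Num.sqrt d%:R / 2) + 0 * (1 / 2))) ^+ 2).
  rewrite !(expr2, intrD, intrM) -!pmulrn.
  apply: (@eq_by _ _ _ (- (b%:~R * b%:~R)) (Num.sqrt (d%:R : RR) ^+ 2 - d%:R)); last by rewrite hs subrr.
  by rewrite expr2; field.
move=> h; move: h; rewrite t4 => h.
lra.
Qed.

Lemma copp (a b : RR) : - Complex a b = Complex (- a) (- b).
Proof. by []. Qed.

Lemma parallelogram (x y : CC) :
  cabs (x + y) ^+ 2 + cabs (x - y) ^+ 2 = 2 * cabs x ^+ 2 + 2 * cabs y ^+ 2.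
Proof. case: x => a b; case: y => c e; rewrite !copp !cadd !cabs2 /=; ring. Qed.

Lemma coshRN x : coshR (- x) = coshR x.
Proof. by rewrite /coshR opprK addrC. Qed.

Lemma cosh_key (B : 'M[CC]_2) :
  4 * coshR (transl_length B) = cabs (\tr B) ^+ 2 + cabs ((\tr B) ^+ 2 - 4).
Proof.
rewrite /transl_length /eig.
set s := \tr B; set dl := sqrtc _.
have hdl : dl ^+ 2 = s ^+ 2 - 4 by rewrite sqr_sqrtc.
set l := (s + dl) / 2; set m := (s - dl) / 2.
have hlm : l * m = 1.
  apply: (@eq_by _ _ _ (- 1 / 4) (dl ^+ 2 - (s ^+ 2 - 4))); last by rewrite hdl subrr.
  by rewrite /l /m; field.
have hs : s = l + m by rewrite /l /m; field.
have hd : dl = l - m by rewrite /l /m; field.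
have hrm : cabs l * cabs m = 1 by rewrite -cabsM hlm (cabs_nat 1).
have r0 : cabs l != 0 by apply/eqP => h; move: hrm; rewrite h mul0r => /eqP; rewrite eq_sym oner_eq0.
have rpos : 0 < cabs l by rewrite lt_def r0 cabs_ge0.
have hm : cabs m = (cabs l)^-1 by apply: (mulfI r0); rewrite hrm mulfV.
rewrite -hdl cabsX2 hs hd parallelogram hm.
have hc : coshR (2 * `|ln (cabs l)|) = coshR (2 * ln (cabs l)).
  case: (lerP 0 (ln (cabs l))) => h; first by rewrite ger0_norm.
  by rewrite ltr0_norm // mulrN coshRN.
rewrite hc /coshR.
have e2 : expR (2 * ln (cabs l)) = cabs l ^+ 2.
  by rewrite mulr_natl mulr2n expRD lnK ?posrE // expr2.
by rewrite expRN e2; field.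
Qed.

Lemma cosh_lt x y : 0 <= x -> x < y -> coshR x < coshR y.
Proof.
move=> h0 hxy; rewrite /coshR !expRN.
have hY : 1 <= expR x by apply: le_trans (expR_ge1Dx x); lra.
have hYX : expR x < expR y by rewrite ltr_expR.
set X := expR y in hYX *; set Y := expR x in hY hYX *.
have X0 : X != 0 by apply/eqP => h; move: hYX hY; rewrite h; lra.
have Y0 : Y != 0 by apply/eqP => h; move: hY; rewrite h; lra.
rewrite ltr_pM2r ?invr_gt0 //; rewrite -subr_gt0.
have -> : X + X^-1 - (Y + Y^-1) = (X - Y) * (X * Y - 1) / (X * Y).
  by field; rewrite Y0 X0.
apply: divr_gt0; last by apply: mulr_gt0; lra.
apply: mulr_gt0; first lra.
rewrite subr_gt0; nra.
Qed.

Lemma eq_by2 (R : comRingType) (x y c1 e1 c2 e2 : R) :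
  x - y = c1 * e1 + c2 * e2 -> e1 = 0 -> e2 = 0 -> x = y.
Proof. by move=> h h1 h2; apply/eqP; rewrite -subr_eq0 h h1 h2 !mulr0 addr0. Qed.

Lemma F_ge (s t : CC) : cabs t ^+ 2 + 4 <= cabs s ^+ 2 ->
  cabs t ^+ 2 + cabs (t ^+ 2 - 4) <= cabs s ^+ 2 + cabs (s ^+ 2 - 4).
Proof.
move=> h.
have h1 := cabsBr (s ^+ 2) 4; have h2 := cabsB (t ^+ 2) 4.
rewrite !cabsX2 (cabs_nat 4) in h1 h2; lra.
Qed.

Lemma sq_bound (x y : RR) : 4 < y -> y + 1 <= x -> y ^+ 2 + 4 <= x ^+ 2.
Proof. move=> h1 h2; nra. Qed.

Lemma n01 : (i0 == i1) = false. Proof. by []. Qed.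
Lemma n10 : (i1 == i0) = false. Proof. by []. Qed.

Theorem proposition4p4 (d : nat) (hd : class_number_one_d d)
  (D t u : CC) (hD : discriminant d D) (ht : inO d t) (hu : inO d u)
  (hpell : t ^+ 2 - D * u ^+ 2 = 4)
  (ht1 : 4 < cabs t) (ht2 : cabs t < 4 / 9 * cabs u ^+ 2)
  (beta xi : CC) (hbeta : inO d beta) (hxi : inO d xi)
  (hDbx : D = beta ^+ 2 + 4 * xi) :
  let tau := (t - beta * u) / 2 in
  (forall B : 'M[CC]_2, inSL2O_tau_u d tau u B -> loxodromic B ->
     4 * coshR (transl_length B) >= cabs t ^+ 2 + cabs (t ^+ 2 - 4))
  /\
  (forall B : 'M[CC]_2, inSL2O_tau_u d tau u B -> loxodromic B ->
     \tr B = t ->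
     forall B' : 'M[CC]_2, inSL2O_tau_u d tau u B' -> loxodromic B' ->
       transl_length B <= transl_length B').
Proof.
move=> tau.
have ht' : t = 2 * tau + beta * u by rewrite /tau; field.
clearbody tau.
have u0 : u != 0.
  apply/eqP => hu0; move: hpell; rewrite hu0 expr0n /= mulr0 subr0 => h.
  have := cabsX2 t; rewrite h (cabs_nat 4) => h'.
  have := cabs_ge0 t; nra.
have hct : 0 <= cabs t := cabs_ge0 t.
have hcu : 0 <= cabs u := cabs_ge0 u.
have key : forall B, inSL2O_tau_u d tau u B -> loxodromic B ->
    \tr B = t \/ cabs t ^+ 2 + 4 <= cabs (\tr B) ^+ 2.
  move=> B [[hO hdet] hc] hl.
  rewrite det22 in hdet.
  case: hc => hc.
  - have [p [hp /eqP ea]] := hc i0 i0; have [q [hq /eqP ee]] := hc i1 i1.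
    have [r [hr /eqP eb]] := hc i0 i1; have [w [hw /eqP ec]] := hc i1 i0.
    rewrite eqxx subr_eq in ea; rewrite eqxx subr_eq in ee.
    rewrite n01 subr0 in eb; rewrite n10 subr0 in ec.
    move/eqP: ea => ea; move/eqP: ee => ee; move/eqP: eb => eb; move/eqP: ec => ec.
    rewrite ea ee eb ec /= in hdet.
    set k := p * q - r * w.
    have hk : p + q + u * k = 0.
      apply: (mulfI u0); rewrite mulr0.
      apply: (@eq_by _ _ _ 1 ((u * p + 1) * (u * q + 1) - u * r * (u * w) - 1)).
        by rewrite /k; ring.
      by rewrite hdet subrr.
    have htr : \tr B = 2 - u ^+ 2 * k.
      rewrite tr22 ea ee /=.
      by apply: (@eq_by _ _ _ u (p + q + u * k)); [ring | rewrite hk].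
    have kO : inO d k by apply: inOB; apply: inOM.
    have [k0|k0] := eqVneq k 0.
      exfalso; apply: hl; rewrite htr k0 mulr0 subr0 cnat /=; split => //; lra.
    right.
    have hk1 := cabs_ge1 d _ hd kO k0.
    have := cabsBr (u ^+ 2 * k) 2.
    rewrite -[cabs (u ^+ 2 * k - 2)]cabsN opprB -htr cabsM cabsX2 (cabs_nat 2) => h.
    apply: sq_bound => //.
    nra.
  - have [p [hp /eqP ea]] := hc i0 i0; have [q [hq /eqP ee]] := hc i1 i1.
    have [r [hr /eqP eb]] := hc i0 i1; have [w [hw /eqP ec]] := hc i1 i0.
    rewrite eqxx mul1r subr_eq in ea; rewrite eqxx mul1r subr_eq in ee.
    rewrite n01 mul0r subr0 in eb; rewrite n10 mul0r subr0 in ec.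
    move/eqP: ea => ea; move/eqP: ee => ee; move/eqP: eb => eb; move/eqP: ec => ec.
    rewrite ea ee eb ec in hdet.
    have tauO : inO d tau.
      have -> : tau = B i0 i0 - u * p by rewrite ea; ring.
      by apply: inOB => //; apply: inOM.
    have H2 : tau ^+ 2 + tau * beta * u - xi * u ^+ 2 - 1 = 0.
      apply: (@eq_by _ _ _ (1 / 4) (t ^+ 2 - D * u ^+ 2 - 4)).
        by rewrite ht' hDbx; field.
      by rewrite hpell subrr.
    set k := p * q - r * w.
    set n := p + q - beta.
    have H1 : tau * n + u * (k + xi) = 0.
      apply: (mulfI u0); rewrite mulr0.
      apply: (@eq_by2 _ _ _ 1 ((u * p + tau) * (u * q + tau) - u * r * (u * w) - 1)
                           (-1) (tau ^+ 2 + tau * beta * u - xi * u ^+ 2 - 1)).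
          by rewrite /k /n; ring.
        by rewrite hdet subrr.
      by rewrite H2.
    set m := - (tau * (xi + k) + (xi * u - beta * tau) * n).
    have hn : n = u * m.
      apply: (@eq_by2 _ _ _ tau (tau * n + u * (k + xi)) (- n)
                 (tau ^+ 2 + tau * beta * u - xi * u ^+ 2 - 1)).
          by rewrite /m; ring.
        by rewrite H1.
      by rewrite H2.
    have htr : \tr B = t + u ^+ 2 * m.
      rewrite tr22 ea ee ht'.
      apply: (@eq_by _ _ _ u (n - u * m)); first by rewrite /n; ring.
      by rewrite hn subrr.
    have kO : inO d k by apply: inOB; apply: inOM.
    have nO : inO d n by apply: inOB => //; apply: inOD.
    have mO : inO d m.
      apply: inON; apply: inOD; apply: inOM => //; first by apply: inOD.
      by apply: inOB; apply: inOM.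
    have [m0|m0] := eqVneq m 0.
      by left; rewrite htr m0 mulr0 addr0.
    right.
    have hm1 := cabs_ge1 d _ hd mO m0.
    have := cabsDr (u ^+ 2 * m) t.
    rewrite [u ^+ 2 * m + t]addrC -htr cabsM cabsX2 => h.
    apply: sq_bound => //.
    nra.
have part1 : forall B : 'M[CC]_2, inSL2O_tau_u d tau u B -> loxodromic B ->
     4 * coshR (transl_length B) >= cabs t ^+ 2 + cabs (t ^+ 2 - 4).
  move=> B hB hl; rewrite cosh_key.
  case: (key B hB hl) => [->|h]; first by [].
  exact: F_ge.
split => //.
move=> B hB hl htr B' hB' hl'.
have h1 := part1 B' hB' hl'.
rewrite -htr -cosh_key in h1.
rewrite leNgt; apply/negP => hlt.
have h0 : 0 <= transl_length B' by rewrite /transl_length mulr_ge0.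
have := cosh_lt _ _ h0 hlt.
lra.
Qed.
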